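(* Fix the number of treatment days $N\ge1$ and consider the problem: minimize $Y_{N-1}^+$ over doses $d_0,\dots,d_{N-1}\ge0$ subject to $\sum_{k=0}^{N-1}\mathrm{BED}_O(d_k)\le c$. Assume $\phi(x)>0$ for all $x>0$ and that $\phi$ is non-increasing in $x$. If $[\alpha/\beta]_O\ge\gamma[\alpha/\beta]_T$, then it is optimal to deliver a single dose $$d_{N-1}^*=\frac{[\alpha/\beta]_O}{2\gamma}\left[\sqrt{1+\frac{4c}{[\alpha/\beta]_O}}-1\right]$$ on the last day and $d_i=0$ for $i<N-1$. If $[\alpha/\beta]_O<\gamma[\alpha/\beta]_T$, then any optimal sequence of doses satisfies $d_0^*\le d_1^*\le\cdots\le d_{N-1}^*$.
   Context: Model: Tumor parameters $\alpha_T>0$, $\beta_T>0$, $[\alpha/\beta]_T=\alpha_T/\beta_T$; organ-at-risk (OAR) parameter $[\alpha/\beta]_O>0$; sparing factor $0<\gamma<1$; OAR limit $c>0$. Define $\mathrm{BED}_T(d)=d\left(1+\frac{d}{[\alpha/\beta]_T}\right)$ and $\mathrm{BED}_O(d)=\gamma d\left(1+\frac{\gamma d}{[\alpha/\beta]_O}\right)$. Tumor growth between doses follows $\frac{1}{x}\frac{dx}{dt}=\phi(x)$, with $\phi:(0,\infty)\to\mathbb{R}$ continuous and non-increasing. Doses $d_0,\dots,d_{N-1}$ are delivered at times $0,1,\dots,N-1$. With $Y=\ln(\text{number of tumor cells})/\alpha_T$, let $F$ be the one-day growth map for $Y$ under the ODE. With initial cell number $X_0>0$ and $Y_0^-=\ln(X_0)/\alpha_T$: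 $Y_0^+=Y_0^--\mathrm{BED}_T(d_0)$, $Y_{i+1}^+=F(Y_i^+)-\mathrm{BED}_T(d_{i+1})$ for $i=0,\dots,N-2$. *)

(* Defs.v *)
From Stdlib Require Import Reals Lra.
Open Scope R_scope.

(* Biologically effective doses. abT = [alpha/beta]_T, abO = [alpha/beta]_O. *)
Definition BEDT (abT d : R) : R := d * (1 + d / abT).
Definition BEDO (abO gam d : R) : R := gam * d * (1 + gam * d / abO).

Fixpoint sumR (n : nat) (f : nat -> R) : R :=
  match n with O => 0 | S m => sumR m f + f m end.

(* F is the one-day growth map for Y = ln(cells)/alphaT under
   (1/x) dx/dt = phi(x): starting from x(0) = exp(alphaT*y), the
   (positive) solution x of dx/dt = x*phi(x) on [0,1] gives F y = ln(x 1)/alphaT. *)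
Definition is_growth_map (alphaT : R) (phi : R -> R) (F : R -> R) : Prop :=
  forall y : R, exists x : R -> R,
    x 0 = exp (alphaT * y) /\
    (forall t, 0 <= t <= 1 -> 0 < x t /\ derivable_pt_lim x t (x t * phi (x t))) /\
    F y = ln (x 1) / alphaT.

Fixpoint Yplus (F : R -> R) (abT Y0 : R) (d : nat -> R) (i : nat) : R :=
  match i with
  | O => Y0 - BEDT abT (d O)
  | S j => F (Yplus F abT Y0 d j) - BEDT abT (d (S j))
  end.

(* Feasible dose sequences d_0..d_{N-1} (values d k for k >= N are irrelevant). *)
Definition feasible (N : nat) (abO gam c : R) (d : nat -> R) : Prop :=
  (forall k, (k < N)%nat -> 0 <= d k) /\
  sumR N (fun k => BEDO abO gam (d k)) <= c.

Definition optimal (N : nat) (F : R -> R) (abT abO gam c Y0 : R) (d : nat -> R) : Prop :=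
  feasible N abO gam c d /\
  forall d', feasible N abO gam c d' ->
    Yplus F abT Y0 d (N - 1) <= Yplus F abT Y0 d' (N - 1).

Definition last_day_dose (N : nat) (abO gam c : R) : nat -> R :=
  fun i => if Nat.eqb i (N - 1)
           then abO / (2 * gam) * (sqrt (1 + 4 * c / abO) - 1)
           else 0.

(* Main.v *)
Require Import Defs.
From Stdlib Require Import Reals Lra Lia Psatz.
Open Scope R_scope.

Lemma sumR_ext n f g : (forall k, (k < n)%nat -> f k = g k) -> sumR n f = sumR n g.
Proof. induction n; simpl; intros H; auto. rewrite IHn by (intros; apply H; lia). rewrite (H n) by lia. auto. Qed.

Lemma sumR_le n f g : (forall k, (k < n)%nat -> f k <= g k) -> sumR n f <= sumR n g.
Proof. induction n; simpl; intros H. lra. pose proof (H n ltac:(lia)). pose proof (IHn ltac:(intros; apply H; lia)). lra. Qed.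

Lemma sumR_nonneg n f : (forall k, (k < n)%nat -> 0 <= f k) -> 0 <= sumR n f.
Proof. induction n; simpl; intros H. lra. pose proof (H n ltac:(lia)). pose proof (IHn ltac:(intros; apply H; lia)). lra. Qed.

Lemma sumR_mulr n f a : sumR n (fun k => f k * a) = sumR n f * a.
Proof. induction n; simpl. lra. rewrite IHn. lra. Qed.

Lemma sumR_term n f k : (forall j, (j < n)%nat -> 0 <= f j) -> (k < n)%nat -> f k <= sumR n f.
Proof.
  induction n; intros H Hk. lia. simpl.
  destruct (Nat.eq_dec k n) as [->|Hne].
  - pose proof (sumR_nonneg n f ltac:(intros; apply H; lia)). lra.
  - pose proof (IHn ltac:(intros; apply H; lia) ltac:(lia)). pose proof (H n ltac:(lia)). lra.
Qed.

Lemma sumR_pair n f g i : (i + 2 <= n)%nat ->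
  (forall k, k <> i -> k <> S i -> f k = g k) -> f i + f (S i) = g i + g (S i) ->
  sumR n f = sumR n g.
Proof.
  intros Hn Hfg Hp. induction n. lia.
  simpl. destruct (Nat.eq_dec n (S i)) as [->|Hne].
  - simpl. rewrite (sumR_ext i f g) by (intros; apply Hfg; lia). lra.
  - rewrite IHn by lia. rewrite (Hfg n) by lia. auto.
Qed.

Lemma Rdiv_le_0_compat a b : 0 <= a -> 0 < b -> 0 <= a / b.
Proof. intros. unfold Rdiv. apply Rmult_le_pos; auto. left; apply Rinv_0_lt_compat; auto. Qed.

Lemma dstar_prop a g c : 0 < a -> 0 < g -> 0 <= c ->
  0 <= a / (2 * g) * (sqrt (1 + 4 * c / a) - 1) /\
  BEDO a g (a / (2 * g) * (sqrt (1 + 4 * c / a) - 1)) = c.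
Proof.
  intros Ha Hg Hc.
  assert (H4 : 0 <= 4 * c / a) by (apply Rdiv_le_0_compat; lra).
  pose proof (sqrt_pos (1 + 4 * c / a)) as Hr0.
  pose proof (sqrt_sqrt (1 + 4 * c / a) ltac:(lra)) as Hr2.
  set (r := sqrt (1 + 4 * c / a)) in *.
  assert (1 <= r) by nra.
  split.
  - apply Rmult_le_pos. apply Rlt_le, Rdiv_lt_0_compat; lra. lra.
  - unfold BEDO.
    assert (E : 4 * c / a * a = 4 * c) by (field; lra).
    replace (g * (a / (2 * g) * (r - 1))) with (a * (r - 1) / 2) by (field; lra).
    replace (a * (r - 1) / 2 * (1 + a * (r - 1) / 2 / a)) with (a * (r * r - 1) / 4) by (field; lra).
    rewrite Hr2. field. lra.
Qed.

Lemma BEDO_mono_inv a g d D : 0 < a -> 0 < g -> 0 <= d -> 0 <= D ->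
  BEDO a g d <= BEDO a g D -> d <= D.
Proof.
  unfold BEDO. intros Ha Hg Hd HD H.
  destruct (Rle_or_lt d D) as [|Hl]; auto. exfalso.
  assert (g * d > g * D) by nra.
  assert (g * d * (g * d) / a >= g * D * (g * D) / a).
  { assert (0 <= g * D) by (apply Rmult_le_pos; lra). assert (g * D * (g * D) <= g * d * (g * d)) by (apply Rmult_le_compat; lra). assert (0 < / a) by (apply Rinv_0_lt_compat; lra). unfold Rdiv. apply Rle_ge. apply Rmult_le_compat_r; lra. }
  assert (E1 : g * d * (1 + g * d / a) = g * d + g * d * (g * d) / a) by (field; lra).
  assert (E2 : g * D * (1 + g * D / a) = g * D + g * D * (g * D) / a) by (field; lra).
  lra.
Qed.

Lemma BEDT_nonneg T d : 0 < T -> 0 <= d -> 0 <= BEDT T d.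
Proof. unfold BEDT. intros. apply Rmult_le_pos; auto. assert (0 <= d / T) by (apply Rdiv_le_0_compat; lra). lra. Qed.

Lemma BEDO_nonneg a g d : 0 < a -> 0 < g -> 0 <= d -> 0 <= BEDO a g d.
Proof. unfold BEDO. intros. apply Rmult_le_pos. nra. assert (0 <= g * d / a) by (apply Rdiv_le_0_compat; nra). lra. Qed.

Lemma BEDT_mono T d D : 0 < T -> 0 <= d -> d <= D -> BEDT T d <= BEDT T D.
Proof.
  unfold BEDT. intros. assert (d / T <= D / T) by (unfold Rdiv; apply Rmult_le_compat_r; [left; apply Rinv_0_lt_compat|]; lra).
  assert (0 <= d / T) by (apply Rdiv_le_0_compat; lra). nra.
Qed.

Lemma per_k a g T d D : 0 < a -> 0 < g -> 0 < T -> a >= g * T -> 0 <= d -> d <= D ->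
  BEDT T d * BEDO a g D <= BEDO a g d * BEDT T D.
Proof.
  unfold BEDT, BEDO. intros.
  assert (E : g * d * (1 + g * d / a) * (D * (1 + D / T)) - d * (1 + d / T) * (g * D * (1 + g * D / a))
     = g * d * D * (D - d) * (a - g * T) / (a * T)) by (field; lra).
  assert (0 <= g * d * D * (D - d) * (a - g * T) / (a * T)).
  { apply Rdiv_le_0_compat. repeat apply Rmult_le_pos; nra. nra. }
  lra.
Qed.

Lemma pair_strict a g T d1 d2 e : 0 < a -> 0 < g -> 0 < T -> a < g * T ->
  0 <= d2 -> d2 < d1 -> 0 <= e ->
  BEDO a g e + BEDO a g e = BEDO a g d1 + BEDO a g d2 ->
  BEDT T d1 + BEDT T d2 < BEDT T e + BEDT T e.
Proof.
  unfold BEDT, BEDO. intros Ha Hg HT Hl H2 H12 He Hc.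
  assert (C : 2 * e - d1 - d2 = g * (d1 * d1 + d2 * d2 - 2 * e * e) / a).
  { apply (Rmult_eq_reg_l g); [|lra]. apply (Rmult_eq_reg_r a); [|lra].
    assert (E1: g * (2 * e - d1 - d2) * a = a * (g * e * (1 + g * e / a) + g * e * (1 + g * e / a)) - a*(g*d1*(1+g*d1/a) + g*d2*(1+g*d2/a)) - g * (g * (2*e*e - d1*d1 - d2*d2))) by (field; lra).
    rewrite E1, Hc. field. lra. }
  assert (Q : 2 * e * e < d1 * d1 + d2 * d2).
  { destruct (Rlt_or_le (2 * e * e) (d1 * d1 + d2 * d2)) as [|Hq]; auto. exfalso.
    assert (0 <= g * (2 * e * e - d1 * d1 - d2 * d2) / a) by (apply Rdiv_le_0_compat; [apply Rmult_le_pos|]; lra).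
    assert (X : g * (d1 * d1 + d2 * d2 - 2 * e * e) / a = - (g * (2 * e * e - d1 * d1 - d2 * d2) / a)) by (field; lra).
    assert (2 * e <= d1 + d2) by lra.
    assert (4 * e * e <= (d1 + d2) * (d1 + d2)) by nra.
    assert (0 < (d1 - d2) * (d1 - d2)) by nra. nra. }
  assert (E : e * (1 + e / T) + e * (1 + e / T) - (d1 * (1 + d1 / T) + d2 * (1 + d2 / T))
     = (d1 * d1 + d2 * d2 - 2 * e * e) * (g * T - a) / (a * T)).
  { replace (e * (1 + e / T) + e * (1 + e / T) - (d1 * (1 + d1 / T) + d2 * (1 + d2 / T)))
      with ((2 * e - d1 - d2) - (d1 * d1 + d2 * d2 - 2 * e * e) / T) by (field; lra).
    rewrite C. field. lra. }
  assert (0 < (d1 * d1 + d2 * d2 - 2 * e * e) * (g * T - a) / (a * T)).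
  { apply Rdiv_lt_0_compat. nra. nra. }
  lra.
Qed.
From Coquelicot Require Import Coquelicot.

Section ODE.
Variable phi : R -> R.
Hypothesis Hphi_cont : forall x, 0 < x -> continuity_pt phi x.
Hypothesis Hphi_pos : forall x, 0 < x -> 0 < phi x.

Definition ginv (v : R) : R := / phi (exp v).
Definition Hf (v : R) : R := RInt ginv 0 v.

Lemma ginv_cont v : continuity_pt ginv v.
Proof.
  unfold ginv. apply continuity_pt_inv.
  - apply (continuity_pt_comp exp phi). apply derivable_continuous_pt, derivable_pt_exp.
    apply Hphi_cont, exp_pos.
  - apply Rgt_not_eq, Hphi_pos, exp_pos.
Qed.

Lemma ginv_pos v : 0 < ginv v.
Proof. unfold ginv. apply Rinv_0_lt_compat, Hphi_pos, exp_pos. Qed.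

Lemma Hf_deriv v : is_derive Hf v (ginv v).
Proof.
  apply (is_derive_RInt ginv Hf 0).
  - apply filter_forall. intros b. unfold Hf. apply (@RInt_correct R_CompleteNormedModule). apply (ex_RInt_continuous ginv 0 b).
    intros z _. apply continuity_pt_filterlim, ginv_cont.
  - apply continuity_pt_filterlim, ginv_cont.
Qed.

Lemma Hf_lt a b : a < b -> Hf a < Hf b.
Proof.
  intros Hab.
  destruct (MVT_gen Hf a b ginv) as [c [_ Hc]].
  - intros; apply Hf_deriv.
  - intros; apply continuity_pt_filterlim; apply (@ex_derive_continuous R_AbsRing R_NormedModule).
    eexists; apply Hf_deriv.
  - assert (0 < ginv c * (b - a)) by (apply Rmult_lt_0_compat; [apply ginv_pos|lra]). lra.
Qed.

Lemma Hf_le_inv a b : Hf a <= Hf b -> a <= b.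
Proof.
  intros H. destruct (Rle_or_lt a b) as [|Hl]; auto.
  apply Hf_lt in Hl. lra.
Qed.

Lemma Hf_lt_inv a b : Hf a < Hf b -> a < b.
Proof.
  intros H. destruct (Rlt_or_le a b) as [|Hl]; auto.
  destruct Hl as [Hl|Hl]. apply Hf_lt in Hl. lra. subst; lra.
Qed.

Lemma deriv_nonpos (f df : R -> R) a b : a <= b ->
  (forall t, a <= t <= b -> is_derive f t (df t)) ->
  (forall t, a <= t <= b -> df t <= 0) -> f b <= f a.
Proof.
  intros Hab Hd Hs.
  destruct (MVT_gen f a b df) as [c [Hc Heq]].
  - intros t Ht. apply Hd. rewrite Rmin_left in Ht by lra. rewrite Rmax_right in Ht by lra. lra.
  - intros t Ht. rewrite Rmin_left in Ht by lra. rewrite Rmax_right in Ht by lra.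
    apply continuity_pt_filterlim; apply (@ex_derive_continuous R_AbsRing R_NormedModule). eexists; apply Hd; lra.
  - rewrite Rmin_left in Hc by lra. rewrite Rmax_right in Hc by lra.
    assert (df c * (b - a) <= 0).
    { apply Rmult_le_0_r; [apply Hs; lra | lra]. }
    lra.
Qed.

Lemma sol_H (x : R -> R) :
  (forall t, 0 <= t <= 1 -> 0 < x t /\ derivable_pt_lim x t (x t * phi (x t))) ->
  forall t, 0 <= t <= 1 -> Hf (ln (x t)) = Hf (ln (x 0)) + t.
Proof.
  intros Hx t Ht.
  assert (Hd : forall s, 0 <= s <= 1 ->
     is_derive (fun s => Hf (ln (x s)) - s) s 0).
  { intros s Hs. destruct (Hx s Hs) as [Hpos Hder].
    apply is_derive_Reals in Hder.
    pose proof (is_derive_comp ln x s _ _ (is_derive_ln _ Hpos) Hder) as D1.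
    pose proof (is_derive_comp Hf _ s _ _ (Hf_deriv _) D1) as D2.
    pose proof (is_derive_minus _ _ s _ _ D2 (@is_derive_id R_AbsRing s)) as D3.
    simpl in D3. unfold scal, minus, plus, opp, one in D3; simpl in D3. unfold mult in D3; simpl in D3.
    match type of D3 with is_derive _ _ ?l => replace 0 with l; [exact D3|] end.
    unfold ginv. rewrite exp_ln by auto. pose proof (Hphi_pos _ Hpos). field. split; lra. }
  assert (H1 := deriv_nonpos (fun s => Hf (ln (x s)) - s) (fun _ => 0) 0 t (proj1 Ht)).
  assert (H2 := deriv_nonpos (fun s => -(Hf (ln (x s)) - s)) (fun _ => -0) 0 t (proj1 Ht)).
  simpl in H1, H2.
  assert (Hf (ln (x t)) - t <= Hf (ln (x 0)) - 0).
  { apply H1. intros; apply Hd; lra. intros; lra. }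
  assert (-(Hf (ln (x t)) - t) <= -(Hf (ln (x 0)) - 0)).
  { apply H2. intros t0 Ht0. pose proof (is_derive_opp _ t0 _ (Hd t0 ltac:(lra))) as D. unfold opp in D; simpl in D. exact D. intros; lra. }
  lra.
Qed.

Variable alphaT : R.
Hypothesis HaT : 0 < alphaT.
Hypothesis Hphi_noninc : forall x y, 0 < x -> x <= y -> phi y <= phi x.
Variable F : R -> R.
Hypothesis HF : is_growth_map alphaT phi F.

Lemma F_H y : Hf (alphaT * F y) = Hf (alphaT * y) + 1.
Proof.
  destruct (HF y) as [x [H0 [Hx HFy]]].
  assert (E : alphaT * F y = ln (x 1)).
  { rewrite HFy. field. lra. }
  rewrite E, (sol_H x Hx 1) by lra. rewrite H0, ln_exp. reflexivity.
Qed.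

Lemma F_lt y z : y < z -> F y < F z.
Proof.
  intros H.
  assert (alphaT * y < alphaT * z) by (apply Rmult_lt_compat_l; lra).
  apply Hf_lt in H0. assert (Hf (alphaT * F y) < Hf (alphaT * F z)) by (rewrite !F_H; lra). clear H0. rename H1 into H0.
  apply Hf_lt_inv in H0. nra.
Qed.

Lemma F_le y z : y <= z -> F y <= F z.
Proof.
  intros [H|H]. left; apply F_lt; auto. subst; lra.
Qed.

Lemma F_contr y z : y <= z -> F z - F y <= z - y.
Proof.
  intros Hyz.
  destruct (HF z) as [x1 [H10 [Hx1 HF1]]].
  destruct (HF y) as [x2 [H20 [Hx2 HF2]]].
  assert (Hord : forall t, 0 <= t <= 1 -> x2 t <= x1 t).
  { intros t Ht.
    pose proof (sol_H x1 Hx1 t Ht). pose proof (sol_H x2 Hx2 t Ht).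
    rewrite H10, ln_exp in H. rewrite H20, ln_exp in H0.
    assert (Hf (alphaT * y) <= Hf (alphaT * z)).
    { destruct (Rle_lt_or_eq_dec _ _ Hyz) as [Hl|Hl].
      left; apply Hf_lt; nra. subst; lra. }
    assert (ln (x2 t) <= ln (x1 t)) by (apply Hf_le_inv; lra).
    destruct (Hx1 t Ht), (Hx2 t Ht).
    destruct (Rle_or_lt (x2 t) (x1 t)) as [|Hl]; auto.
    apply ln_increasing in Hl; auto. lra. }
  assert (Hd := deriv_nonpos (fun t => ln (x1 t) - ln (x2 t))
      (fun t => phi (x1 t) - phi (x2 t)) 0 1 ltac:(lra)).
  simpl in Hd.
  assert (ln (x1 1) - ln (x2 1) <= ln (x1 0) - ln (x2 0)).
  { apply Hd.
    - intros t Ht. destruct (Hx1 t Ht) as [P1 D1]. destruct (Hx2 t Ht) as [P2 D2].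
      apply is_derive_Reals in D1, D2.
      pose proof (is_derive_comp ln x1 t _ _ (is_derive_ln _ P1) D1) as E1.
      pose proof (is_derive_comp ln x2 t _ _ (is_derive_ln _ P2) D2) as E2.
      pose proof (is_derive_minus _ _ t _ _ E1 E2) as E3.
      unfold scal, minus, plus, opp in E3; simpl in E3. unfold mult in E3; simpl in E3.
      match type of E3 with is_derive _ _ ?l => replace (phi (x1 t) - phi (x2 t)) with l; [exact E3|] end.
      field; lra.
    - intros t Ht. destruct (Hx2 t Ht) as [Hp _]. pose proof (Hphi_noninc _ _ Hp (Hord t Ht)). lra. }
  rewrite H10, H20, !ln_exp in H.
  rewrite HF1, HF2.
  assert (alphaT * ((ln (x1 1) / alphaT - ln (x2 1) / alphaT)) <= alphaT * (z - y)).
  { replace (alphaT * (ln (x1 1) / alphaT - ln (x2 1) / alphaT)) with (ln (x1 1) - ln (x2 1)) by (field; lra). lra. }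
  nra.
Qed.
End ODE.

Fixpoint Fiter (F : R -> R) (n : nat) (y : R) : R :=
  match n with O => y | S m => F (Fiter F m y) end.

Lemma Y_lower F T Y0 d i :
  (forall y z, y <= z -> F y <= F z) -> (forall y z, y <= z -> F z - F y <= z - y) ->
  (forall k, (k <= i)%nat -> 0 <= BEDT T (d k)) ->
  Fiter F i Y0 - sumR (S i) (fun k => BEDT T (d k)) <= Yplus F T Y0 d i.
Proof.
  intros Hm Hc. induction i; intros Hb; simpl.
  - lra.
  - simpl in IHi. pose proof (IHi ltac:(intros; apply Hb; lia)) as IH.
    pose proof (sumR_nonneg i (fun k => BEDT T (d k)) ltac:(intros; apply Hb; lia)).
    pose proof (Hb i ltac:(lia)).
    pose proof (Hm _ _ IH).
    pose proof (Hc (Fiter F i Y0 - (sumR i (fun k => BEDT T (d k)) + BEDT T (d i))) (Fiter F i Y0) ltac:(lra)). lra.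
Qed.

Lemma Yplus_ext F T Y0 d d' j : (forall k, (k <= j)%nat -> d k = d' k) ->
  Yplus F T Y0 d j = Yplus F T Y0 d' j.
Proof.
  induction j; intros H; simpl. rewrite H by lia; auto.
  rewrite IHj by (intros; apply H; lia). rewrite (H (S j)) by lia. auto.
Qed.

Definition pre (F : R -> R) T Y0 (d : nat -> R) (i : nat) : R :=
  match i with O => Y0 | S j => F (Yplus F T Y0 d j) end.

Lemma Yplus_pre F T Y0 d i : Yplus F T Y0 d i = pre F T Y0 d i - BEDT T (d i).
Proof. destruct i; reflexivity. Qed.

Lemma pre_ext F T Y0 d d' i : (forall k, (k < i)%nat -> d k = d' k) -> pre F T Y0 d i = pre F T Y0 d' i.
Proof. destruct i; simpl; intros H; auto. rewrite (Yplus_ext F T Y0 d d') by (intros; apply H; lia). auto. Qed.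

Lemma BEDO_mono a g d D : 0 < a -> 0 < g -> 0 <= d -> d <= D -> BEDO a g d <= BEDO a g D.
Proof.
  unfold BEDO. intros.
  assert (g * d <= g * D) by (apply Rmult_le_compat_l; lra).
  assert (0 <= g * d) by (apply Rmult_le_pos; lra).
  assert (g * d / a <= g * D / a) by (unfold Rdiv; apply Rmult_le_compat_r; [left; apply Rinv_0_lt_compat|]; lra).
  assert (0 <= g * d / a) by (apply Rdiv_le_0_compat; lra).
  apply Rmult_le_compat; lra.
Qed.

Theorem theorem3
  (N : nat) (alphaT betaT abO gam c X0 : R) (phi F : R -> R)
  (HN : (1 <= N)%nat)
  (HaT : 0 < alphaT) (HbT : 0 < betaT) (HabO : 0 < abO)
  (Hgam : 0 < gam < 1) (Hc : 0 < c) (HX0 : 0 < X0)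
  (Hphi_cont : forall x, 0 < x -> continuity_pt phi x)
  (Hphi_noninc : forall x y, 0 < x -> x <= y -> phi y <= phi x)
  (Hphi_pos : forall x, 0 < x -> 0 < phi x)
  (HF : is_growth_map alphaT phi F) :
  let abT := alphaT / betaT in
  let Y0 := ln X0 / alphaT in
  (abO >= gam * abT ->
     optimal N F abT abO gam c Y0 (last_day_dose N abO gam c)) /\
  (abO < gam * abT ->
     forall d, optimal N F abT abO gam c Y0 d ->
       forall i, (i + 1 < N)%nat -> d i <= d (i + 1)%nat).
Proof.
  intros abT Y0.
  assert (HT : 0 < abT) by (apply Rdiv_lt_0_compat; lra).
  assert (Flt : forall y z, y < z -> F y < F z) by exact (F_lt phi Hphi_cont Hphi_pos alphaT HaT F HF).
  assert (Fle : forall y z, y <= z -> F y <= F z) by exact (F_le phi Hphi_cont Hphi_pos alphaT HaT F HF).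
  assert (Fc : forall y z, y <= z -> F z - F y <= z - y) by exact (F_contr phi Hphi_cont Hphi_pos alphaT HaT Hphi_noninc F HF).
  destruct Hgam as [Hg0 Hg1].
  split.
  - intros Hab.
    destruct (dstar_prop abO gam c HabO Hg0 ltac:(lra)) as [HD0 HDc].
    set (D := abO / (2 * gam) * (sqrt (1 + 4 * c / abO) - 1)) in *.
    assert (Hld : forall k, last_day_dose N abO gam c k = if Nat.eqb k (N - 1) then D else 0) by reflexivity.
    assert (Hzero : forall n, (n <= N - 1)%nat -> sumR n (fun k => BEDO abO gam (last_day_dose N abO gam c k)) = 0).
    { induction n; intros Hn; simpl. auto. rewrite IHn by lia. rewrite Hld.
      destruct (Nat.eqb_spec n (N - 1)); [lia|]. unfold BEDO. ring. }
    split.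
    + split.
      * intros k _. rewrite Hld. destruct (Nat.eqb k (N - 1)); lra.
      * replace N with (S (N - 1)) at 1 by lia. simpl. rewrite Hzero by lia.
        rewrite Hld, Nat.eqb_refl. lra.
    + intros d' [Hnn Hsum].
      assert (Hyl : forall j, (j < N - 1)%nat -> Yplus F abT Y0 (last_day_dose N abO gam c) j = Fiter F j Y0).
      { induction j; intros Hj; simpl; rewrite Hld.
        - destruct (Nat.eqb_spec 0 (N - 1)); try lia. unfold BEDT; ring.
        - destruct (Nat.eqb_spec (S j) (N - 1)); try lia. rewrite IHj by lia. unfold BEDT; ring. }
      assert (HyN : Yplus F abT Y0 (last_day_dose N abO gam c) (N - 1) = Fiter F (N - 1) Y0 - BEDT abT D).
      { assert (Hlast : last_day_dose N abO gam c (N - 1) = D) by (rewrite Hld, Nat.eqb_refl; auto).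
        destruct (N - 1)%nat as [|m] eqn:EN; simpl; rewrite Hlast. auto.
        rewrite Hyl by lia. auto. }
      assert (Hlow := Y_lower F abT Y0 d' (N - 1) Fle Fc
         ltac:(intros; apply BEDT_nonneg; auto; apply Hnn; lia)).
      replace (S (N - 1)) with N in Hlow by lia.
      assert (Hbo : forall k, (k < N)%nat -> BEDO abO gam (d' k) <= c).
      { intros k Hk. eapply Rle_trans; [|exact Hsum].
        apply (sumR_term N (fun k => BEDO abO gam (d' k))); auto.
        intros; apply BEDO_nonneg; auto. }
      assert (Hs : sumR N (fun k => BEDT abT (d' k) * c) <= sumR N (fun k => BEDO abO gam (d' k) * BEDT abT D)).
      { apply sumR_le. intros k Hk. rewrite <- HDc at 1. apply per_k; [lra|lra|lra|exact Hab|apply Hnn; auto|].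
        apply BEDO_mono_inv with abO gam; auto. rewrite HDc. auto. }
      rewrite !sumR_mulr in Hs.
      pose proof (BEDT_nonneg abT D HT HD0).
      assert (sumR N (fun k => BEDT abT (d' k)) * c <= BEDT abT D * c) by nra.
      assert (sumR N (fun k => BEDT abT (d' k)) <= BEDT abT D).
      { apply Rmult_le_reg_r with c; auto. }
      lra.
  - intros Hab d [[Hnn Hsum] Hopt] i Hi.
    rewrite Nat.add_1_r in *.
    destruct (Rle_or_lt (d i) (d (S i))) as [|Hlt]; auto. exfalso.
    assert (Hd1 : 0 <= d i) by (apply Hnn; lia).
    assert (Hd2 : 0 <= d (S i)) by (apply Hnn; lia).
    set (m := (BEDO abO gam (d i) + BEDO abO gam (d (S i))) / 2).
    pose proof (BEDO_nonneg abO gam _ HabO Hg0 Hd1).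
    pose proof (BEDO_nonneg abO gam _ HabO Hg0 Hd2).
    pose proof (BEDO_mono abO gam _ _ HabO Hg0 Hd2 (Rlt_le _ _ Hlt)).
    destruct (dstar_prop abO gam m HabO Hg0 ltac:(unfold m; lra)) as [He0 Hem].
    set (e := abO / (2 * gam) * (sqrt (1 + 4 * m / abO) - 1)) in *.
    assert (He1 : e <= d i) by (apply BEDO_mono_inv with abO gam; auto; rewrite Hem; unfold m; lra).
    assert (He2 : d (S i) <= e) by (apply BEDO_mono_inv with abO gam; auto; rewrite Hem; unfold m; lra).
    set (d' := fun k => if (Nat.eqb k i || Nat.eqb k (S i))%bool then e else d k).
    assert (Hdi : d' i = e) by (unfold d'; rewrite Nat.eqb_refl; reflexivity).
    assert (HdSi : d' (S i) = e) by (unfold d'; rewrite Nat.eqb_refl, Bool.orb_true_r; reflexivity).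
    assert (Hdo : forall k, k <> i -> k <> S i -> d' k = d k).
    { intros k Hk1 Hk2. unfold d'. destruct (Nat.eqb_spec k i); try lia. destruct (Nat.eqb_spec k (S i)); try lia. auto. }
    assert (Hfe : feasible N abO gam c d').
    { split.
      - intros k Hk. destruct (Nat.eq_dec k i) as [->|]; [rewrite Hdi; auto|].
        destruct (Nat.eq_dec k (S i)) as [->|]; [rewrite HdSi; auto|]. rewrite Hdo by auto. auto.
      - rewrite (sumR_pair N (fun k => BEDO abO gam (d' k)) (fun k => BEDO abO gam (d k)) i); auto.
        lia. intros k Hk1 Hk2. rewrite Hdo; auto. rewrite Hdi, HdSi, Hem. unfold m. lra. }
    specialize (Hopt d' Hfe).
    assert (Hstep : Yplus F abT Y0 d' (S i) < Yplus F abT Y0 d (S i)).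
    { simpl. rewrite !(Yplus_pre F abT Y0 _ i).
      rewrite (pre_ext F abT Y0 d' d i) by (intros; apply Hdo; lia).
      rewrite Hdi, HdSi.
      set (w := pre F abT Y0 d i).
      pose proof (BEDT_mono abT _ _ HT He0 He1).
      pose proof (Fc (w - BEDT abT (d i)) (w - BEDT abT e) ltac:(lra)).
      pose proof (pair_strict abO gam abT (d i) (d (S i)) e HabO Hg0 HT Hab Hd2 Hlt He0 ltac:(rewrite Hem; unfold m; lra)).
      lra. }
    assert (Hprop : forall k, (S i + k < N)%nat -> Yplus F abT Y0 d' (S i + k) < Yplus F abT Y0 d (S i + k)).
    { induction k; intros Hk. rewrite Nat.add_0_r; auto.
      rewrite Nat.add_succ_r.
      change (Yplus F abT Y0 d' (S (S i + k))) with (F (Yplus F abT Y0 d' (S i + k)) - BEDT abT (d' (S (S i + k)))).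
      change (Yplus F abT Y0 d (S (S i + k))) with (F (Yplus F abT Y0 d (S i + k)) - BEDT abT (d (S (S i + k)))).
      rewrite (Hdo (S (S i + k))) by lia.
      pose proof (Flt _ _ (IHk ltac:(lia))). lra. }
    pose proof (Hprop (N - 1 - S i)%nat ltac:(lia)).
    replace (S i + (N - 1 - S i))%nat with (N - 1)%nat in H2 by lia.
    lra.
Qed.
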